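(* Let $N$ be finite, $\mathbf{P}$ stochastic on $N$, $0<\beta<1$, $\mathbf{R}\in\mathbb{R}^N$, $S\subseteq N$ and $\nu\in\mathbb R$. For every stopping rule $\tau$ and every $i\in N$: (a) $g_i^\tau=g_i^S-\sum_{j\in S}w_j^Sx_{ij}^{0,\tau}+\sum_{j\in S^c}w_j^Sx_{ij}^{1,\tau}$; (b) $f_i^\tau=f_i^S-\sum_{j\in S}r_j^Sx_{ij}^{0,\tau}+\sum_{j\in S^c}r_j^Sx_{ij}^{1,\tau}$; (c) $f_i^\tau-\nu g_i^\tau=f_i^S-\nu g_i^S-\sum_{j\in S}(r_j^S-\nu w_j^S)x_{ij}^{0,\tau}+\sum_{j\in S^c}(r_j^S-\nu w_j^S)x_{ij}^{1,\tau}$.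
   Context: $N$ is a finite state set, $\mathbf{P}=(p_{ij})$ stochastic, $\beta\in(0,1)$, $\mathbf{R}=(R_j)$; $X(t)$ is the Markov chain with matrix $\mathbf{P}$, $\mathsf{E}_i$ is expectation given $X(0)=i$, $S^c=N\setminus S$. A stopping rule is a (possibly randomized) stopping time $\tau\in\{0,1,\dots\}\cup\{\infty\}$ for the chain's history. Define $f_i^\tau=\mathsf{E}_i[\sum_{t=0}^{\tau-1}R_{X(t)}\beta^t]$, $g_i^\tau=\mathsf{E}_i[\sum_{t=0}^{\tau-1}\beta^t]$, and occupancy measures $x_{ij}^{1,\tau}=\mathsf{E}_i[\sum_{t=0}^{\tau-1}1_{\{X(t)=j\}}\beta^t]$ and $x_{ij}^{0,\tau}=\mathsf{E}_i[1_{\{\tau<\infty,X(\tau)=j\}}\beta^\tau]/(1-\beta)$ (the discounted time spent passive at $j$ when, after stopping, the chain remains frozen at $X(\tau)$ forever). For $S\subseteq N$ let $\tau_S=\min\{t\ge0:X(t)\notin S\}$, $f_i^S=f_i^{\tau_S}$, $g_i^S=g_i^{\tau_S}$, and $$w_i^S=1+\beta\sum_{j}p_{ij}g_j^S-\beta g_i^S,\qquad r_i^S=R_i+\beta\sum_jp_{ij}f_j^S-\beta f_i^S.$$ *)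

(* Defs.v *)
From HB Require Import structures.
From mathcomp Require Import all_boot all_order all_algebra.
From mathcomp Require Import all_classical all_reals all_analysis.
Set Implicit Arguments. Unset Strict Implicit. Unset Printing Implicit Defensive.
Import Order.TTheory GRing.Theory Num.Theory.
Local Open Scope ring_scope.

Section MarkovStopping.
Variables (R : realType) (N : finType).

Definition tsum (u : nat -> R) : R := limn (fun n => \sum_(0 <= t < n) u t).

Definition stochastic (P : N -> N -> R) : Prop :=
  (forall i j, 0 <= P i j) /\ (forall i, \sum_(j : N) P i j = 1).

Fixpoint chainp (P : N -> N -> R) (x : N) (r : seq N) : R :=
  match r with [::] => 1 | y :: r' => P x y * chainp P y r' end.

(* P_i(X(0..t) = h) for a history h = [:: X(0); ...; X(t)] *)
Definition pathp (P : N -> N -> R) (i : N) (h : seq N) : R :=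
  match h with [::] => 0 | x :: r => (x == i)%:R * chainp P x r end.

(* A (possibly randomized) stopping rule is described by its stopping
   hazard: sigma h = P(tau = t | X(0..t) = h, tau >= t), for h a history
   of length t+1.  Valid iff values lie in [0,1]. *)
Definition stopping_rule (sigma : seq N -> R) : Prop :=
  forall h, 0 <= sigma h <= 1.

(* P(tau > t | X(0..t) = h), t = size h - 1 *)
Definition cont (sigma : seq N -> R) (h : seq N) : R :=
  \prod_(s < size h) (1 - sigma (take s.+1 h)).

(* P(tau = t | X(0..t) = h), t = size h - 1 *)
Definition stopw (sigma : seq N -> R) (h : seq N) : R :=
  (\prod_(s < (size h).-1) (1 - sigma (take s.+1 h))) * sigma h.

Definition lastst t (h : (t.+1).-tuple N) : N := tnth h ord_max.

Variables (P : N -> N -> R) (beta : R) (Rw : N -> R).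

(* f_i^tau = E_i[sum_{t<tau} R_{X(t)} beta^t] *)
Definition fval (sigma : seq N -> R) (i : N) : R :=
  tsum (fun t => beta ^+ t *
    \sum_(h : (t.+1).-tuple N) pathp P i h * cont sigma h * Rw (lastst h)).

(* g_i^tau = E_i[sum_{t<tau} beta^t] *)
Definition gval (sigma : seq N -> R) (i : N) : R :=
  tsum (fun t => beta ^+ t *
    \sum_(h : (t.+1).-tuple N) pathp P i h * cont sigma h).

(* x_{ij}^{1,tau} = E_i[sum_{t<tau} 1{X(t)=j} beta^t] *)
Definition x1 (sigma : seq N -> R) (i j : N) : R :=
  tsum (fun t => beta ^+ t *
    \sum_(h : (t.+1).-tuple N) pathp P i h * cont sigma h * (lastst h == j)%:R).

(* x_{ij}^{0,tau} = E_i[1{tau<oo, X(tau)=j} beta^tau] / (1 - beta) *)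
Definition x0 (sigma : seq N -> R) (i j : N) : R :=
  tsum (fun t => beta ^+ t *
    \sum_(h : (t.+1).-tuple N) pathp P i h * stopw sigma h * (lastst h == j)%:R)
  / (1 - beta).

(* tau_S = min{t >= 0 : X(t) \notin S}: stop exactly when current state leaves S *)
Definition sigmaS (S : {set N}) (h : seq N) : R :=
  match h with [::] => 0 | x :: r => (last x r \notin S)%:R end.

Definition fS (S : {set N}) (i : N) : R := fval (sigmaS S) i.
Definition gS (S : {set N}) (i : N) : R := gval (sigmaS S) i.

Definition wS (S : {set N}) (i : N) : R :=
  1 + beta * \sum_(j : N) P i j * gS S j - beta * gS S i.
Definition rS (S : {set N}) (i : N) : R :=
  Rw i + beta * \sum_(j : N) P i j * fS S j - beta * fS S i.

End MarkovStopping.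

(* Main.v *)
Require Import Defs.
From HB Require Import structures.
From mathcomp Require Import all_boot all_order all_algebra.
From mathcomp Require Import all_classical all_reals all_analysis.
From mathcomp Require Import ring.
Import Order.TTheory GRing.Theory Num.Theory.
Import numFieldNormedType.Exports.
Local Open Scope classical_set_scope.
Local Open Scope ring_scope.
Local Open Scope ring_scope.
Set Implicit Arguments. Unset Strict Implicit. Unset Printing Implicit Defensive.

Section S.
Variables (R : realType) (N : finType) (P : N -> N -> R) (beta : R).

Lemma sum_tuple_cons n (F : seq N -> R) :
  \sum_(h : n.+1.-tuple N) F h = \sum_(x : N) \sum_(h : n.-tuple N) F (x :: h).
Proof.
rewrite pair_big /=.
rewrite (reindex (fun p : N * n.-tuple N => [tuple of p.1 :: p.2])) /=; first by [].
exists (fun t : n.+1.-tuple N => (thead t, [tuple of behead t])) => [[x t]|t] _ /=.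
  by congr (_, _); apply: val_inj.
by apply: val_inj => /=; rewrite [in RHS](tuple_eta t).
Qed.

Lemma sum_tuple0 (F : seq N -> R) : \sum_(h : 0.-tuple N) F h = F [::].
Proof.
rewrite (big_pred1 [tuple]) // => t; apply/esym/eqP; apply: val_inj; by case: t => [[]].
Qed.

Lemma lastst_last t (h : (t.+1).-tuple N) d : lastst h = last d h.
Proof. by rewrite /lastst (tnth_nth d) /= -nth_last size_tuple. Qed.

Lemma sum_delta (W : N -> R) x : \sum_j W j * (x == j)%:R = W x.
Proof.
rewrite (bigD1 x) //= eqxx mulr1 big1 ?addr0 // => j /negbTE.
by rewrite eq_sym => ->; rewrite mulr0.
Qed.

Lemma pathp_sum n i (F : seq N -> R) :
  \sum_(h : n.+1.-tuple N) pathp P i h * F h =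
  \sum_(h : n.-tuple N) chainp P i h * F (i :: h).
Proof.
rewrite (@sum_tuple_cons _ (fun h => pathp P i h * F h)) (bigD1 i) //= [X in _ + X]big1 ?addr0.
  by apply: eq_bigr => h _; rewrite eqxx mul1r.
by move=> x /negbTE xi; apply: big1 => h _; rewrite xi !mul0r.
Qed.

Definition shift (s : seq N -> R) (x : N) : seq N -> R := fun h => s (x :: h).
Definition precont (s : seq N -> R) (h : seq N) : R :=
  \prod_(k < (size h).-1) (1 - s (take k.+1 h)).

Lemma cont_cons s i h : cont s (i :: h) = (1 - s [:: i]) * cont (shift s i) h.
Proof.
rewrite /cont /= big_ord_recl /= ?take0.
by congr (_ * _); apply: eq_bigr => k _; rewrite /shift /bump leq0n add1n.
Qed.

Lemma precont_cons2 s i x h :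
  precont s (i :: x :: h) = (1 - s [:: i]) * precont (shift s i) (x :: h).
Proof.
rewrite /precont /= big_ord_recl /= ?take0.
by congr (_ * _); apply: eq_bigr => k _; rewrite /shift /bump leq0n add1n.
Qed.

Lemma stopwE s h : stopw s h = precont s h * s h.
Proof. by []. Qed.

Lemma stopw_cons2 s i x h :
  stopw s (i :: x :: h) = (1 - s [:: i]) * stopw (shift s i) (x :: h).
Proof. by rewrite !stopwE precont_cons2 mulrA. Qed.

Definition GW (c : (seq N -> R) -> seq N -> R) n s i (W : N -> R) : R :=
  \sum_(h : n.+1.-tuple N) pathp P i h * (c s h * W (last i h)).

Lemma GW_S c n s i W :
  (forall s i x h, c s (i :: x :: h) = (1 - s [:: i]) * c (shift s i) (x :: h)) ->
  GW c n.+1 s i W = (1 - s [:: i]) * \sum_k P i k * GW c n (shift s i) k W.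
Proof.
move=> hc; rewrite /GW (@pathp_sum n.+1 i (fun h => c s h * W (last i h))).
rewrite (@sum_tuple_cons _ (fun h => chainp P i h * (c s (i :: h) * W (last i (i :: h))))) mulr_sumr; apply: eq_bigr => k _.
rewrite (@pathp_sum n k (fun h => c (shift s i) h * W (last k h))) !mulr_sumr; apply: eq_bigr => h _ /=.
rewrite hc; ring.
Qed.

Lemma GW_cont0 s i W : GW (@cont R N) 0 s i W = (1 - s [:: i]) * W i.
Proof. by rewrite /GW (@pathp_sum 0 i (fun h => @cont R N s h * W (last i h))) (@sum_tuple0 (fun h => chainp P i h * (@cont R N s (i :: h) * W (last i (i :: h))))) /= cont_cons /cont big_ord0 mul1r mulr1. Qed.
Lemma GW_stopw0 s i W : GW (@stopw R N) 0 s i W = s [:: i] * W i.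
Proof. by rewrite /GW (@pathp_sum 0 i (fun h => @stopw R N s h * W (last i h))) (@sum_tuple0 (fun h => chainp P i h * (@stopw R N s (i :: h) * W (last i (i :: h))))) /= stopwE /precont big_ord0 mul1r mul1r. Qed.
Lemma GW_precont0 s i W : GW precont 0 s i W = W i.
Proof. by rewrite /GW (@pathp_sum 0 i (fun h => precont s h * W (last i h))) (@sum_tuple0 (fun h => chainp P i h * (precont s (i :: h) * W (last i (i :: h))))) /= /precont big_ord0 mul1r mul1r. Qed.

Definition delta (j : N) : N -> R := fun x => (x == j)%:R.

Lemma GW_lin c n s i W : GW c n s i W = \sum_j W j * GW c n s i (delta j).
Proof.
rewrite /GW; under [RHS]eq_bigr do rewrite mulr_sumr.
rewrite exchange_big; apply: eq_bigr => h _.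
rewrite -[W (last i h)]sum_delta !mulr_sumr; apply: eq_bigr => j _.
rewrite /delta; ring.
Qed.


Local Notation AW := (GW (@cont R N)).
Local Notation BW := (GW (@stopw R N)).
Local Notation CW := (GW precont).

Lemma AW_S n s i W : AW n.+1 s i W = (1 - s [:: i]) * \sum_k P i k * AW n (shift s i) k W.
Proof. by apply: GW_S => *; rewrite cont_cons. Qed.
Lemma BW_S n s i W : BW n.+1 s i W = (1 - s [:: i]) * \sum_k P i k * BW n (shift s i) k W.
Proof. by apply: GW_S => *; rewrite stopw_cons2. Qed.
Lemma CW_S n s i W : CW n.+1 s i W = (1 - s [:: i]) * \sum_k P i k * CW n (shift s i) k W.
Proof. by apply: GW_S => *; rewrite precont_cons2. Qed.

Definition uf (V : N -> R) : N -> R := fun j => V j - beta * \sum_k P j k * V k.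

Lemma main_fin V n : forall s i, V i =
  \sum_(0 <= t < n) beta ^+ t * (AW t s i (uf V) + BW t s i V) + beta ^+ n * CW n s i V.
Proof.
elim: n => [|n IH] s i.
  by rewrite big_geq // add0r expr0 mul1r GW_precont0.
rewrite big_nat_recl //= expr0 mul1r GW_cont0 GW_stopw0.
have E : \sum_(0 <= t < n) beta ^+ t.+1 * (AW t.+1 s i (uf V) + BW t.+1 s i V)
   + beta ^+ n.+1 * CW n.+1 s i V = beta * (1 - s [:: i]) * \sum_k P i k * V k.
  transitivity (beta * (1 - s [:: i]) * \sum_k P i k *
     (\sum_(0 <= t < n) beta ^+ t * (AW t (shift s i) k (uf V) + BW t (shift s i) k V)
      + beta ^+ n * CW n (shift s i) k V)); last first.
    by congr (_ * _); apply: eq_bigr => k _; rewrite -IH.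
  rewrite CW_S.
  under eq_bigr do rewrite AW_S BW_S.
  rewrite !mulr_sumr.
  rewrite [RHS](eq_bigr (fun k => beta * (1 - s [:: i]) * P i k *
      (\sum_(0 <= t < n) beta ^+ t * (AW t (shift s i) k (uf V) + BW t (shift s i) k V))
      + beta ^+ n.+1 * ((1 - s [:: i]) * (P i k * CW n (shift s i) k V)))); last first.
    by move=> k _; rewrite exprS; ring.
  rewrite big_split /=; congr (_ + _).
  under [RHS]eq_bigr do rewrite mulr_sumr.
  rewrite [RHS]exchange_big /=; apply: eq_bigr => t _.
  rewrite !mulr_sumr -big_split /= mulr_sumr; apply: eq_bigr => k _; rewrite exprS; ring.
rewrite -addrA E /uf; ring.
Qed.

Lemma cvg_fsum (r : seq N) (F : N -> nat -> R) (l : N -> R) :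
  (forall j, F j @ \oo --> l j) ->
  (fun n => \sum_(j <- r) F j n) @ \oo --> \sum_(j <- r) l j.
Proof.
move=> hF; elim: r => [|a r IH].
  under eq_fun do rewrite big_nil; rewrite big_nil; exact: cvg_cst.
under eq_fun do rewrite big_cons; rewrite big_cons; exact: cvgD.
Qed.

Hypothesis hP : stochastic P.
Hypothesis hb : 0 < beta < 1.

Lemma step_bound a (X : N -> R) i : 0 <= a <= 1 -> (forall k, 0 <= X k <= 1) ->
  0 <= a * \sum_k P i k * X k <= 1.
Proof.
case: hP => P0 P1 /andP[a0 a1] hX.
have s0 : 0 <= \sum_k P i k * X k.
  by apply: sumr_ge0 => k _; apply: mulr_ge0 => //; case/andP: (hX k).
have s1 : \sum_k P i k * X k <= 1.
  rewrite -(P1 i); apply: ler_sum => k _; apply: ler_piMr => //; by case/andP: (hX k).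
by rewrite mulr_ge0 //= mulr_ile1.
Qed.

Lemma shift_rule s x : stopping_rule s -> stopping_rule (shift s x).
Proof. by move=> hs h; apply: hs. Qed.

Lemma GW_bnd c
  (hc : forall s i x h, c s (i :: x :: h) = (1 - s [:: i]) * c (shift s i) (x :: h))
  (h0 : forall s i W, stopping_rule s -> (forall x, 0 <= W x <= 1) -> 0 <= GW c 0 s i W <= 1)
  n : forall s i W, stopping_rule s -> (forall x, 0 <= W x <= 1) -> 0 <= GW c n s i W <= 1.
Proof.
elim: n => [|n IH] s i W hs hW; first exact: h0.
rewrite GW_S //; apply: step_bound.
  by case/andP: (hs [:: i]) => a b; rewrite subr_ge0 b /= lerBlDr lerDl.
by move=> k; apply: IH => //; apply: shift_rule.
Qed.

Lemma delta_bnd j x : 0 <= delta j x <= 1.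
Proof. by rewrite /delta; case: (x == j); rewrite ?ler01 ?lexx. Qed.

Lemma prod_bnd (a b : R) : 0 <= a <= 1 -> 0 <= b <= 1 -> 0 <= a * b <= 1.
Proof. by move=> /andP[a0 a1] /andP[b0 b1]; rewrite mulr_ge0 //= mulr_ile1. Qed.

Lemma one_minus_bnd (a : R) : 0 <= a <= 1 -> 0 <= 1 - a <= 1.
Proof. by move=> /andP[h0 h1]; rewrite subr_ge0 h1 /= lerBlDr lerDl. Qed.

Lemma AW_bnd n s i W : stopping_rule s -> (forall x, 0 <= W x <= 1) -> 0 <= AW n s i W <= 1.
Proof.
apply: GW_bnd => [*|s' i' W' hs hW]; first by rewrite cont_cons.
by rewrite GW_cont0; apply: prod_bnd => //; apply: one_minus_bnd.
Qed.
Lemma BW_bnd n s i W : stopping_rule s -> (forall x, 0 <= W x <= 1) -> 0 <= BW n s i W <= 1.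
Proof.
apply: GW_bnd => [*|s' i' W' hs hW]; first by rewrite stopw_cons2.
by rewrite GW_stopw0; apply: prod_bnd.
Qed.
Lemma CW_bnd n s i W : stopping_rule s -> (forall x, 0 <= W x <= 1) -> 0 <= CW n s i W <= 1.
Proof.
apply: GW_bnd => [*|s' i' W' hs hW]; first by rewrite precont_cons2.
by rewrite GW_precont0.
Qed.

Lemma beta_ge0 : 0 <= beta. Proof. by case/andP: hb => /ltW. Qed.

Lemma cvg_ser (G : nat -> R) : (forall t, 0 <= G t <= 1) ->
  cvgn (series (fun t => beta ^+ t * G t)).
Proof.
move=> hG; apply: (@series_le_cvg _ _ (geometric 1 beta)).
- by move=> t; apply: mulr_ge0; [apply: exprn_ge0; apply: beta_ge0 | case/andP: (hG t)].
- by move=> t; rewrite /geometric /= mul1r; apply: exprn_ge0; apply: beta_ge0.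
- move=> t; rewrite /geometric /= mul1r; apply: ler_piMr; first by apply: exprn_ge0; apply: beta_ge0.
  by case/andP: (hG t).
- apply: is_cvg_geometric_series; rewrite ger0_norm ?beta_ge0 //; by case/andP: hb.
Qed.

Definition serG c s i W := series (fun t => beta ^+ t * GW c t s i W).
Definition XG c s i j := limn (serG c s i (delta j)).

Lemma serG_lin c s i W : serG c s i W = (fun n => \sum_j W j * serG c s i (delta j) n).
Proof.
apply/funext => n; rewrite /serG /series /=.
under eq_bigr do rewrite GW_lin mulr_sumr.
rewrite exchange_big /=; apply: eq_bigr => j _; rewrite mulr_sumr.
by apply: eq_bigr => t _; ring.
Qed.

Lemma cvgG c s i W : (forall t j, 0 <= GW c t s i (delta j) <= 1) ->
  serG c s i W @ \oo --> \sum_j W j * XG c s i j.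
Proof.
move=> hG; rewrite serG_lin; apply: cvg_fsum => j; apply: cvgMl_tmp.
exact: (cvg_ser (hG ^~ j)).
Qed.

Lemma CW_abs n s i V : stopping_rule s -> `|CW n s i V| <= \sum_x `|V x|.
Proof.
move=> hs; rewrite GW_lin; apply: le_trans (ler_norm_sum _ _ _) _.
apply: ler_sum => j _; rewrite normrM; apply: ler_piMr => //.
have /andP[c0 c1] := CW_bnd n i hs (delta_bnd j).
by rewrite ger0_norm.
Qed.

Lemma resid0 s i V : stopping_rule s -> (fun n => beta ^+ n * CW n s i V) @ \oo --> 0.
Proof.
move=> hs; set M := \sum_x `|V x|.
have hE : (fun n => beta ^+ n) @ \oo --> 0.
  by apply: cvg_expr; rewrite ger0_norm ?beta_ge0 //; case/andP: hb.
apply: (@squeeze_cvgr _ _ _ _ (fun n => - (M * beta ^+ n)) (fun n => M * beta ^+ n)).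
- apply: nearW => n /=; rewrite -ler_norml normrM [`|beta ^+ n|]ger0_norm ?exprn_ge0 ?beta_ge0 // mulrC.
  by apply: ler_wpM2r; [apply: exprn_ge0; apply: beta_ge0 | apply: CW_abs].
- rewrite -oppr0 -(mulr0 M); apply: cvgN; exact: cvgMl_tmp.
- rewrite -(mulr0 M); exact: cvgMl_tmp.
Qed.

Lemma gen_id s i V : stopping_rule s ->
  V i = \sum_j uf V j * XG (@cont R N) s i j + \sum_j V j * XG (@stopw R N) s i j.
Proof.
move=> hs.
have H1 : (serG (@cont R N) s i (uf V) + serG (@stopw R N) s i V) @ \oo -->
   (\sum_j uf V j * XG (@cont R N) s i j + \sum_j V j * XG (@stopw R N) s i j).
  apply: cvgD; first exact: (@cvgG (@cont R N) s i (uf V) (fun t j => AW_bnd t i hs (delta_bnd j))).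
  exact: (@cvgG (@stopw R N) s i V (fun t j => BW_bnd t i hs (delta_bnd j))).
have H2 : (serG (@cont R N) s i (uf V) + serG (@stopw R N) s i V) @ \oo --> V i.
  have -> : serG (@cont R N) s i (uf V) + serG (@stopw R N) s i V =
            (fun n => V i - beta ^+ n * CW n s i V).
    apply/funext => n; rewrite [in RHS](main_fin V n s i) /serG /series /=.
    rewrite addrK.
    transitivity (\sum_(0 <= k < n) beta ^+ k * AW k s i (uf V) + \sum_(0 <= k < n) beta ^+ k * BW k s i V); first by [].
    rewrite -big_split /=; apply: eq_bigr => t _; by rewrite mulrDr.
  rewrite -[X in _ --> X]subr0; apply: cvgB; [exact: cvg_cst | exact: resid0].
have E1 := cvg_lim (@Rhausdorff R) H1. have E2 := cvg_lim (@Rhausdorff R) H2. by rewrite -E2 E1.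
Qed.

Lemma x1E s i j : x1 P beta s i j = XG (@cont R N) s i j.
Proof.
rewrite /x1 /tsum /XG /serG /series /=.
have -> : (fun n => \sum_(0 <= t < n) beta ^+ t * \sum_(h : t.+1.-tuple N)
      pathp P i h * cont s h * (lastst h == j)%:R) =
   (fun n => \sum_(0 <= t < n) beta ^+ t * GW (@cont R N) t s i (delta j)).
  apply/funext => n; apply: eq_bigr => t _; congr (_ * _); apply: eq_bigr => h _.
  by rewrite (lastst_last h i) /delta mulrA.
by [].
Qed.

Lemma x0E s i j : x0 P beta s i j = XG (@stopw R N) s i j / (1 - beta).
Proof.
rewrite /x0 /tsum /XG /serG /series /=.
have -> : (fun n => \sum_(0 <= t < n) beta ^+ t * \sum_(h : t.+1.-tuple N)
      pathp P i h * stopw s h * (lastst h == j)%:R) =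
   (fun n => \sum_(0 <= t < n) beta ^+ t * GW (@stopw R N) t s i (delta j)).
  apply/funext => n; apply: eq_bigr => t _; congr (_ * _); apply: eq_bigr => h _.
  by rewrite (lastst_last h i) /delta mulrA.
by [].
Qed.

Definition Tot s (W : N -> R) i := limn (serG (@cont R N) s i W).

Lemma TotE s W i : stopping_rule s -> Tot s W i = \sum_j W j * XG (@cont R N) s i j.
Proof.
move=> hs; rewrite /Tot.
exact: (cvg_lim (@Rhausdorff R) (@cvgG (@cont R N) s i W (fun t j => AW_bnd t i hs (delta_bnd j)))).
Qed.

Lemma Tot_cvg s W i : stopping_rule s -> serG (@cont R N) s i W @ \oo --> Tot s W i.
Proof.
move=> hs; rewrite TotE //.
exact: (@cvgG (@cont R N) s i W (fun t j => AW_bnd t i hs (delta_bnd j))).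
Qed.

Lemma gvalE s i : gval P beta s i = Tot s (fun _ => 1) i.
Proof.
rewrite /gval /tsum /Tot /serG /series /=.
have -> : (fun n => \sum_(0 <= t < n) beta ^+ t * \sum_(h : t.+1.-tuple N)
      pathp P i h * cont s h) =
   (fun n => \sum_(0 <= t < n) beta ^+ t * GW (@cont R N) t s i (fun _ => 1)).
  apply/funext => n; apply: eq_bigr => t _; congr (_ * _); apply: eq_bigr => h _.
  by rewrite mulr1.
by [].
Qed.

Lemma fvalE Rw s i : fval P beta Rw s i = Tot s Rw i.
Proof.
rewrite /fval /tsum /Tot /serG /series /=.
have -> : (fun n => \sum_(0 <= t < n) beta ^+ t * \sum_(h : t.+1.-tuple N)
      pathp P i h * cont s h * Rw (lastst h)) =
   (fun n => \sum_(0 <= t < n) beta ^+ t * GW (@cont R N) t s i Rw).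
  apply/funext => n; apply: eq_bigr => t _; congr (_ * _); apply: eq_bigr => h _.
  by rewrite (lastst_last h i) mulrA.
by [].
Qed.

Variable S : {set N}.

Lemma sigmaS_rule : stopping_rule (@sigmaS R N S).
Proof.
by move=> [|x r] /=; rewrite ?lexx ?ler01 //; case: (last x r \notin S); rewrite ?lexx ?ler01.
Qed.

Lemma shift_sigmaS j : j \in S -> shift (@sigmaS R N S) j = @sigmaS R N S.
Proof. move=> jS; apply/funext => -[|x r] /=; rewrite /shift /sigmaS /= ?jS //. Qed.

Lemma Tot_out W j : j \notin S -> Tot (@sigmaS R N S) W j = 0.
Proof.
move=> jS; rewrite /Tot /serG /series /=.
have -> : (fun n => \sum_(0 <= t < n) beta ^+ t * GW (@cont R N) t (@sigmaS R N S) j W) = (fun _ => 0).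
  apply/funext => n; apply: big1 => -[|t] _.
    by rewrite GW_cont0 /= jS subrr mul0r mulr0.
  by rewrite AW_S /= jS subrr mul0r mulr0.
exact: lim_cst.
Qed.

Lemma Tot_in W j : j \in S ->
  Tot (@sigmaS R N S) W j = W j + beta * \sum_k P j k * Tot (@sigmaS R N S) W k.
Proof.
move=> jS.
suff H : serG (@cont R N) (@sigmaS R N S) j W @ \oo -->
      (W j + beta * \sum_k P j k * Tot (@sigmaS R N S) W k).
  exact: (cvg_lim (@Rhausdorff R) H).
rewrite -cvg_shiftS.
have -> : [sequence serG (@cont R N) (@sigmaS R N S) j W n.+1]_n =
   (fun n => W j + beta * \sum_k P j k * serG (@cont R N) (@sigmaS R N S) k W n).
  apply/funext => n; rewrite /serG /series /= big_nat_recl //= expr0 mul1r GW_cont0 /= jS subr0 mul1r.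
  congr (_ + _); under eq_bigr do rewrite AW_S /= jS subr0 mul1r shift_sigmaS //.
  rewrite mulr_sumr; under [RHS]eq_bigr do rewrite mulr_sumr mulr_sumr.
  rewrite [RHS]exchange_big /=; apply: eq_bigr => t _; rewrite !mulr_sumr.
  by apply: eq_bigr => k _; rewrite exprS; ring.
apply: cvgD; first exact: cvg_cst.
apply: cvgMl_tmp; apply: cvg_fsum => k; apply: cvgMl_tmp; exact: (Tot_cvg sigmaS_rule).
Qed.

Lemma key s i (W V : N -> R) : stopping_rule s ->
  (forall j, j \notin S -> V j = 0) ->
  (forall j, j \in S -> V j = W j + beta * \sum_k P j k * V k) ->
  Tot s W i = V i
     - \sum_(j in S) (W j + beta * \sum_k P j k * V k - beta * V j) * x0 P beta s i j
     + \sum_(j in ~: S) (W j + beta * \sum_k P j k * V k - beta * V j) * x1 P beta s i j.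
Proof.
move=> hs Vout Vin.
have b1 : 1 - beta != 0 by rewrite subr_eq0 eq_sym; case/andP: hb => _ /lt_eqF ->.
rewrite TotE // [in RHS](@gen_id s i V hs) (big_mkcond (fun j => j \in S)) (big_mkcond (fun j => j \in ~: S)) /=.
rewrite -big_split /= -sumrB -big_split /=; apply: eq_bigr => j _.
rewrite x0E x1E inE /uf.
case: (boolP (j \in S)) => jS /=.
  by rewrite [V j](Vin j jS); field.
rewrite (Vout j jS); ring.
Qed.
End S.

Theorem proposition3 (R : realType) (N : finType) (P : N -> N -> R) (beta : R)
    (Rw : N -> R) (S : {set N}) (nu : R) :
  stochastic P -> 0 < beta < 1 ->
  forall (sigma : seq N -> R), stopping_rule sigma -> forall i : N,
  [/\ gval P beta sigma i =
        gS P beta S i - \sum_(j in S) wS P beta S j * x0 P beta sigma i j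
        + \sum_(j in ~: S) wS P beta S j * x1 P beta sigma i j,
      fval P beta Rw sigma i =
        fS P beta Rw S i - \sum_(j in S) rS P beta Rw S j * x0 P beta sigma i j
        + \sum_(j in ~: S) rS P beta Rw S j * x1 P beta sigma i j
    & fval P beta Rw sigma i - nu * gval P beta sigma i =
        fS P beta Rw S i - nu * gS P beta S i
        - \sum_(j in S) (rS P beta Rw S j - nu * wS P beta S j) * x0 P beta sigma i j
        + \sum_(j in ~: S) (rS P beta Rw S j - nu * wS P beta S j) * x1 P beta sigma i j].
Proof.
move=> hP hb sigma hs i.
have ha : gval P beta sigma i =
        gS P beta S i - \sum_(j in S) wS P beta S j * x0 P beta sigma i j
        + \sum_(j in ~: S) wS P beta S j * x1 P beta sigma i j.
  rewrite gvalE (@key R N P beta hP hb S sigma i (fun _ => 1) (gS P beta S) hs) //.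
    by move=> j jS; rewrite /gS gvalE Tot_out.
  move=> j jS; rewrite /gS gvalE (Tot_in hP hb) //; congr (_ + _ * _).
  by apply: eq_bigr => k _; rewrite gvalE.
have hb' : fval P beta Rw sigma i =
        fS P beta Rw S i - \sum_(j in S) rS P beta Rw S j * x0 P beta sigma i j
        + \sum_(j in ~: S) rS P beta Rw S j * x1 P beta sigma i j.
  rewrite fvalE (@key R N P beta hP hb S sigma i Rw (fS P beta Rw S) hs) //.
    by move=> j jS; rewrite /fS fvalE Tot_out.
  move=> j jS; rewrite /fS fvalE (Tot_in hP hb) //; congr (_ + _ * _).
  by apply: eq_bigr => k _; rewrite fvalE.
split => //; rewrite ha hb'.
under [in RHS]eq_bigr do rewrite mulrBl.
under [in X in _ = _ + X]eq_bigr do rewrite mulrBl.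
rewrite !sumrB.
under [X in _ = _ - (_ - X) + _]eq_bigr do rewrite -mulrA.
under [X in _ = _ + (_ - X)]eq_bigr do rewrite -mulrA.
rewrite -!mulr_sumr.
ring.
Qed.
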